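(* Let $M\ge2$ and $\mathfrak{F}_M=\{\pi/M,2\pi/M,\dots,(M-1)\pi/M\}$. Let $K=\kappa^N$ be a complex parameter and, for $\phi\in\mathfrak{F}_M$, set (with a fixed choice of square root) $$\Delta_\phi=e^{i\phi}\big(\sqrt{\cos^2\phi+K}+\cos\phi\big),\quad \Delta^*_\phi=e^{-i\phi}\big(\sqrt{\cos^2\phi+K}+\cos\phi\big),\quad \Lambda_\phi=\Delta_\phi\Delta^*_\phi .$$ Let $1\le n\le M-1$ and let $\phi_1,\dots,\phi_n$ be distinct elements of $\mathfrak{F}_M$; write $\Delta_k=\Delta_{\phi_k}$, $\Delta_k^*=\Delta^*_{\phi_k}$, $\Lambda_k=\Lambda_{\phi_k}$, and assume $K$ and $\xi\in\mathbb{C}$ are generic so that all denominators below are nonzero. Define the phase shifts $d_{j,k}=\frac{(\Delta_j-\Delta_k)(\Delta_j^*-\Delta_k^* )}{(\Delta_j-\Delta_k^* )(\Delta_j^*-\Delta_k)}$, and for amplitudes $f_1,\dots,f_n$ and integer $m$ define recursively $\Theta^{(0)}_m=1$ and $$\Theta^{(n)}_m(\{f_k,\phi_k\}_{k=1}^n)=\Theta^{(n-1)}_m(\{f_k,\phi_k\}_{k=1}^{n-1})-f_n e^{2im\phi_n}\,\Theta^{(n-1)}_m(\{d_{k,n}f_k,\phi_k\}_{k=1}^{n-1}).$$ Let $s_k(\xi)=\frac{\Delta_k^*}{\Delta_k}\frac{\Delta_k-\xi}{\Delta_k^*-\xi}$, $s_{k,j}=s_k(\Delta_j^* )$, and define $\Theta^{(n)}_m(\xi)=\Theta^{(n)}_m(\{f_k,\phi_k\}_{k=1}^n)$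 with $f_k=s_k(\xi)\prod_{j=1,\,j\ne k}^n s_{k,j}$. Then $$\Theta^{(n)}_n(\xi)=\prod_{k=1}^n\frac{\Delta_k^*-\Delta_k}{\Delta_k^*-\xi}\prod_{1\le j<k\le n}\frac{\Lambda_j-\Lambda_k}{\Delta_j^*-\Delta_k^*},$$ and for $m=0,1,\dots,n$ $$\Theta^{(n)}_m(\xi)=(-K)^{(n-m)(n-m-1)/2}\left(\frac{\xi}{\Delta_1\cdots\Delta_n}\right)^{n-m}\Theta^{(n)}_n(\xi).$$ Moreover, if $\xi=1$, the last formula also holds for $m=-1$.
   Context: Here $\Delta_\phi,\Delta^*_\phi$ parametrize the curve $\Delta\Delta^*=\Delta+\Delta^*+\kappa^N$ with $e^{2i\phi}=\Delta/\Delta^*$ (this holds for either choice of the square root). In the recursion, the functions $\Theta^{(n-1)}_m$ are evaluated at the modified amplitude lists indicated (the amplitudes are treated as formal arguments). *)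

(* Defs.v *)
From HB Require Import structures.
From mathcomp Require Import all_boot all_order all_algebra.
From mathcomp Require Import reals trigo.
From mathcomp Require Import complex.
Set Implicit Arguments. Unset Strict Implicit. Unset Printing Implicit Defensive.
Import Order.TTheory GRing.Theory Num.Theory.
Local Open Scope ring_scope.
Local Open Scope complex_scope.

Section Defs.
Variable R : realType.
Local Notation C := R[i].

(* phi_j = j * pi / M  (elements of F_M are j*pi/M with 0 < j < M) *)
Definition phiM (M j : nat) : R := j%:R * pi / M%:R.

Definition expi (x : R) : C := Complex (cos x) (sin x).

(* Delta_phi and Delta^*_phi, with rt a chosen square root of cos^2 phi + K *)
Definition DeltaF (phi : R) (rt : C) : C := expi phi * (rt + (cos phi)%:C).
Definition DeltaSF (phi : R) (rt : C) : C := expi (- phi) * (rt + (cos phi)%:C).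

Definition dshift (D Ds : nat -> C) (j k : nat) : C :=
  ((D j - D k) * (Ds j - Ds k)) / ((D j - Ds k) * (Ds j - D k)).

(* Theta^{(n)}_m({f_k, phi_k}_{k<n}) (0-based indices); E k = e^{i phi_k},
   so that e^{2 i m phi_k} = (E k) ^ (2 m) with an integer exponent. *)
Fixpoint Theta (D Ds E : nat -> C) (m : int) (n : nat) (f : nat -> C) : C :=
  match n with
  | 0 => 1
  | n'.+1 => Theta D Ds E m n' f
             - f n' * (E n') ^ (2 * m) * Theta D Ds E m n' (fun k => dshift D Ds k n' * f k)
  end.

Definition sfun (D Ds : nat -> C) (k : nat) (xi : C) : C :=
  (Ds k / D k) * ((D k - xi) / (Ds k - xi)).

Definition ampl (D Ds : nat -> C) (n : nat) (xi : C) (k : nat) : C :=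
  sfun D Ds k xi * \prod_(l < n | (l : nat) != k) sfun D Ds k (Ds l).

End Defs.

(* Main.v *)
Require Import Defs.
From HB Require Import structures.
From mathcomp Require Import all_boot all_order all_algebra.
From mathcomp Require Import reals trigo.
From mathcomp Require Import complex.
From mathcomp Require Import ring zify.
Set Implicit Arguments. Unset Strict Implicit. Unset Printing Implicit Defensive.
Import Order.TTheory GRing.Theory Num.Theory.
Local Open Scope ring_scope.


Section Core.
Variable F : fieldType.
Variables (x y : nat -> F).

Definition upd (z : nat -> F) (k : nat) (v : F) := fun i => if i == k then v else z i.

Fixpoint Phi (p : nat) (G : (nat -> F) -> F) (c : nat -> F) (z : nat -> F) : F :=
  match p with
  | 0 => G z
  | p'.+1 => Phi p' G c (upd z p' (y p')) + c p' * Phi p' G c (upd z p' (x p'))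
  end.

Lemma Phi_ext p G1 G2 c z :
  (forall w, (forall i, (p <= i)%N -> w i = z i) -> G1 w = G2 w) ->
  Phi p G1 c z = Phi p G2 c z.
Proof.
elim: p z => [|p IH] z H /=; first by apply: H.
congr (_ + _ * _); apply: IH => w Hw; apply: H => i Hi;
  rewrite Hw ?(ltnW Hi) // /upd; case: eqP => // E; by rewrite E ltnn in Hi.
Qed.

Lemma Phi_c p G c1 c2 z : (forall l, (l < p)%N -> c1 l = c2 l) ->
  Phi p G c1 z = Phi p G c2 z.
Proof.
elim: p z => [|p IH] z H //=.
rewrite H // !IH // => l Hl; apply: H; exact: ltnW.
Qed.

Lemma Phi_scale p G c z a : Phi p (fun w => G w * a) c z = Phi p G c z * a.
Proof. by elim: p z => [|p IH] z //=; rewrite !IH mulrDl mulrA. Qed.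

Lemma Phi_absorb p G c z (g : nat -> F -> F) :
  (forall l, (l < p)%N -> g l (y l) != 0) ->
  Phi p (fun w => G w * \prod_(0 <= l < p) g l (w l)) c z =
  (\prod_(0 <= l < p) g l (y l)) *
  Phi p G (fun l => c l * g l (x l) / g l (y l)) z.
Proof.
elim: p G z => [|p IH] G z Hg /=; first by rewrite !big_geq // mulr1 mul1r.
have Hg' : forall l, (l < p)%N -> g l (y l) != 0 by move=> l Hl; apply: Hg; exact: ltnW.
have E1 : forall v, Phi p (fun w => G w * \prod_(0 <= l < p.+1) g l (w l)) c (upd z p v)
   = (\prod_(0 <= l < p) g l (y l)) * (Phi p G (fun l => c l * g l (x l) / g l (y l)) (upd z p v) * g p v).
  move=> v.
  rewrite (Phi_ext (G2 := fun w => (G w * g p v) * \prod_(0 <= l < p) g l (w l))); last first.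
    move=> w Hw; rewrite big_nat_recr //= Hw // /upd eqxx; ring.
  by rewrite IH // Phi_scale.
rewrite !E1 big_nat_recr //=.
have := Hg p (ltnSn p) => Hp.
field; exact: Hp.
Qed.


Definition dsG (j k : nat) := ((x j - x k) * (y j - y k)) / ((x j - y k) * (y j - x k)).
Fixpoint ThG (e : nat -> F) (n : nat) (f : nat -> F) : F :=
  match n with
  | 0 => 1
  | n'.+1 => ThG e n' f - f n' * e n' * ThG e n' (fun k => dsG k n' * f k)
  end.
Definition Vp p (z : nat -> F) := \prod_(0 <= k < p) \prod_(0 <= l < k) (z l - z k).
Definition Af k t := (x k - t) / (y k - t).
Definition cT (e : nat -> F) p (f : nat -> F) k :=
  - (f k * e k) / \prod_(0 <= j < p | j != k) Af k (y j).

Lemma Phi_step v p c z : (forall l, (l < p)%N -> y l - v != 0) ->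
  Phi p (Vp p.+1) c (upd z p v) =
  (\prod_(0 <= l < p) (y l - v)) * Phi p (Vp p) (fun l => c l * (x l - v) / (y l - v)) (upd z p v).
Proof.
move=> Hv.
rewrite (Phi_ext (G2 := fun w => Vp p w * \prod_(0 <= l < p) (fun l t => t - v) l (w l))).
  by rewrite (@Phi_absorb p _ _ _ (fun l t => t - v)).
move=> w Hw; rewrite /Vp big_nat_recr //= Hw // /upd eqxx //.
Qed.

Lemma prod_cond_recr p l (G : nat -> F) : (l < p)%N ->
  \prod_(0 <= j < p.+1 | j != l) G j = (\prod_(0 <= j < p | j != l) G j) * G p.
Proof.
move=> Hl; rewrite big_mkcond big_nat_recr //= -big_mkcond /=.
by case: eqP => // E; rewrite E ltnn in Hl.
Qed.

Lemma ThG_Phi e p f z :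
  (forall k l, (k < p)%N -> (l < p)%N -> k != l -> x k - y l != 0) ->
  (forall k l, (k < p)%N -> (l < p)%N -> k != l -> y k - y l != 0) ->
  ThG e p f * Vp p y = Phi p (Vp p) (cT e p f) z.
Proof.
elim: p f z => [|p IH] f z Hxy Hyy.
  by rewrite /= /Vp !big_geq ?mulr1.
have Hxy' : forall k l, (k < p)%N -> (l < p)%N -> k != l -> x k - y l != 0.
  by move=> k l Hk Hl; apply: Hxy; apply: ltnW.
have Hyy' : forall k l, (k < p)%N -> (l < p)%N -> k != l -> y k - y l != 0.
  by move=> k l Hk Hl; apply: Hyy; apply: ltnW.
have neq l : (l < p)%N -> l != p by move=> Hl; rewrite neq_ltn Hl.
have Hy l : (l < p)%N -> y l - y p != 0 by move=> Hl; apply: Hyy; rewrite ?ltnS ?leqnn ?(ltnW Hl) ?(neq _ Hl).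
have Hx l : (l < p)%N -> y l - x p != 0.
  by move=> Hl; rewrite -opprB oppr_eq0; apply: Hxy; rewrite ?ltnS ?leqnn ?(ltnW Hl) // eq_sym (neq _ Hl).
have Hx2 l : (l < p)%N -> x l - y p != 0 by move=> Hl; apply: Hxy; rewrite ?ltnS ?leqnn ?(ltnW Hl) ?(neq _ Hl).
rewrite /= Phi_step // Phi_step //.
rewrite (@Phi_c p _ _ (cT e p f)); last first.
  move=> l Hl /=; rewrite /cT prod_cond_recr // /Af.
  have := Hy l Hl; have := Hx2 l Hl => h1 h2.
  set P := \prod_(_ <= _ < _ | _) _.
  case: (eqVneq P 0) => HP.
    by rewrite HP !(mul0r, invr0, mulr0).
  field; rewrite HP h1 h2 //.
rewrite [X in _ + _ * (_ * X)](@Phi_c p _ _ (cT e p (fun k => dsG k p * f k))); last first.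
  move=> l Hl /=; rewrite /cT prod_cond_recr // /Af /dsG.
  have := Hy l Hl; have := Hx2 l Hl; have := Hx l Hl => h0 h1 h2.
  set P := \prod_(_ <= _ < _ | _) _.
  case: (eqVneq P 0) => HP.
    by rewrite HP !(mul0r, invr0, mulr0).
  field; rewrite HP h0 h1 h2 //.
rewrite -!IH //.
rewrite /Vp big_nat_recr //= -/(Vp p y).
rewrite /cT.
have -> : \prod_(0 <= j < p.+1 | j != p) Af p (y j) = \prod_(0 <= j < p) Af p (y j).
  rewrite big_mkcond big_nat_recr //= eqxx mulr1.
  apply: eq_big_nat => i /andP [_ Hi]; by rewrite (neq _ Hi).
have -> : \prod_(0 <= l < p) (y l - x p) = (\prod_(0 <= l < p) Af p (y l)) * \prod_(0 <= l < p) (y l - y p).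
  rewrite -big_split; apply: eq_big_nat => i /andP [_ Hi]; rewrite /Af /=.
  have := Hy i Hi; have : x p - y i != 0 by apply: Hxy; rewrite ?ltnS ?leqnn ?(ltnW Hi) // eq_sym (neq _ Hi).
  move=> h1 h2; field.
  by rewrite -opprB oppr_eq0 h2.
set A := \prod_(0 <= j < p) Af p (y j).
case: (eqVneq A 0) => HA.
  exfalso; move: HA; rewrite /A; apply/eqP; rewrite prodf_seq_neq0.
  apply/allP => i; rewrite mem_iota add0n subn0 => /andP [_ Hi] /=.
  have h1 : x p - y i != 0 by apply: Hxy; rewrite ?ltnS ?leqnn ?(ltnW Hi) // eq_sym (neq _ Hi).
  have h2 : y p - y i != 0 by rewrite -opprB oppr_eq0 Hy.
  by rewrite /Af mulf_neq0 // invr_eq0.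
field; exact: HA.
Qed.

Definition Mz N (z : nat -> F) : 'M[F]_N := \matrix_(k < N, i < N) (z k) ^+ i.
Definition Mmix N p (c z : nat -> F) : 'M[F]_N :=
  \matrix_(k < N, i < N) if (k < p)%N then y k ^+ i + c k * x k ^+ i else z k ^+ i.

Lemma Phi_det N p c z : (p <= N)%N ->
  Phi p (fun w => \det (Mz N w)) c z = \det (Mmix N p c z).
Proof.
elim: p z => [|p IH] z Hp /=.
  by congr (\det _); apply/matrixP => k i; rewrite !mxE.
rewrite !IH ?(ltnW Hp) //.
rewrite (@determinant_multilinear _ _ (Mmix N p.+1 c z) (Mmix N p c (upd z p (y p)))
   (Mmix N p c (upd z p (x p))) (Ordinal Hp) 1 (c p)) ?mul1r //.
- apply/rowP => i; rewrite !mxE /= ltnSn ltnn /upd eqxx; ring.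
- apply/matrixP => k i; rewrite !mxE /=.
  have Hk : bump p k != p.
    by rewrite /bump; case: leqP => H /=; rewrite ?add1n ?add0n; apply/eqP; lia.
  have H2 : (bump p k < p.+1)%N = (bump p k < p)%N by rewrite ltnS leq_eqVlt (negbTE Hk).
  rewrite /upd /= H2; case: ifP => // _; case: eqP => // E; by rewrite E eqxx in Hk.
- apply/matrixP => k i; rewrite !mxE /=.
  have Hk : bump p k != p.
    by rewrite /bump; case: leqP => H /=; rewrite ?add1n ?add0n; apply/eqP; lia.
  have H2 : (bump p k < p.+1)%N = (bump p k < p)%N by rewrite ltnS leq_eqVlt (negbTE Hk).
  rewrite /upd /= H2; case: ifP => // _; case: eqP => // E; by rewrite E eqxx in Hk.
Qed.

Definition Wp N (z : nat -> F) := \prod_(i < N) \prod_(j < N | (i < j)%N) (z j - z i).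

Lemma det_Mz N z : \det (Mz N z) = Wp N z.
Proof.
rewrite -det_tr.
have -> : (Mz N z)^T = Vandermonde N (\row_(j < N) z j).
  by apply/matrixP => i j; rewrite !mxE.
by rewrite det_Vandermonde /Wp; apply: eq_bigr => i _; apply: eq_bigr => j _; rewrite !mxE.
Qed.

Definition sg N : F := \prod_(0 <= k < N) \prod_(0 <= l < k) (-1).

Lemma Vp_det N z : Vp N z = sg N * \det (Mz N z).
Proof.
rewrite det_Mz /Wp /Vp /sg.
have -> : \prod_(i < N) \prod_(j < N | (i < j)%N) (z j - z i)
   = \prod_(0 <= i < N) \prod_(0 <= j < N | (i < j)%N) (z j - z i).
  by rewrite big_mkord; apply: eq_bigr => i _; rewrite big_mkord.
have -> : \prod_(0 <= i < N) \prod_(0 <= j < N | (i < j)%N) (z j - z i)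
   = \prod_(0 <= j < N) \prod_(0 <= i < j) (z j - z i).
  under eq_bigr do rewrite big_mkcond.
  rewrite exchange_big /=; apply: eq_big_nat => j /andP [_ Hj].
  rewrite (big_cat_nat (n := j)) //=; last exact: ltnW.
  rewrite [X in _ * X]big1_seq ?mulr1; last first.
    move=> i /andP [_]; rewrite mem_iota => /andP [Hi _]; by rewrite ltnNge Hi.
  by apply: eq_big_nat => i /andP [_ Hi]; rewrite Hi.
rewrite -big_split; apply: eq_big_nat => k _ /=.
rewrite -big_split; apply: eq_big_nat => l _ /=; ring.
Qed.

End Core.


Section Poly.
Variable F : fieldType.
Variable K : F.

Fixpoint Hp (s : nat) : {poly F} :=
  match s with
  | 0 => 1
  | S s1 => match s1 with
            | 0 => 'X - K%:P
            | S s' => ('X - K%:P) * Hp s1 - 'X * Hp s'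
            end
  end.

Lemma HpSS s : Hp s.+2 = ('X - K%:P) * Hp s.+1 - 'X * Hp s.
Proof. by []. Qed.

Lemma Hp_eval a b : a * b = a + b + K -> forall s,
  (b - a) * (Hp s).[a * b] = b ^+ s.+1 - a ^+ s.+1.
Proof.
move=> hab.
suff H : forall s, (b - a) * (Hp s).[a * b] = b ^+ s.+1 - a ^+ s.+1 /\
                   (b - a) * (Hp s.+1).[a * b] = b ^+ s.+2 - a ^+ s.+2 by move=> s; case: (H s).
elim => [|s [IH1 IH2]].
  split; first by rewrite /= hornerC mulr1 !expr1.
  rewrite /= !hornerE hab; ring.
split => //.
rewrite HpSS !hornerE.
have E : a * b - K = a + b by rewrite hab; ring.
rewrite E mulrBr (mulrCA (b - a)) IH2 (mulrCA (b - a)) IH1 !exprS; ring.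
Qed.

Lemma coefHSS s i : (Hp s.+2)`_i =
  (if i == 0%N then 0 else (Hp s.+1)`_i.-1) - K * (Hp s.+1)`_i
  - (if i == 0%N then 0 else (Hp s)`_i.-1).
Proof. by rewrite HpSS mulrBl !coefB coefXM coefCM coefXM. Qed.

Lemma Hp_coef s :
  [/\ forall i, (s < i)%N -> (Hp s)`_i = 0, (Hp s)`_s = 1 & (Hp s)`_0 = (- K) ^+ s].
Proof.
suff H : forall s, [/\ forall i, (s < i)%N -> (Hp s)`_i = 0, (Hp s)`_s = 1 & (Hp s)`_0 = (- K) ^+ s] /\
   [/\ forall i, (s.+1 < i)%N -> (Hp s.+1)`_i = 0, (Hp s.+1)`_s.+1 = 1 & (Hp s.+1)`_0 = (- K) ^+ s.+1].
  by case: (H s).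
clear s; elim => [|s [[A1 A2 A3] [B1 B2 B3]]].
  split; split.
  - by move=> i Hi; rewrite /= coefC; case: i Hi.
  - by rewrite /= coefC.
  - by rewrite /= coefC.
  - move=> i Hi; rewrite /= coefB coefX coefC; case: i Hi => [|[|i]] //.
    by rewrite subr0.
  - by rewrite /= coefB coefX coefC subr0.
  - by rewrite /= coefB coefX coefC sub0r expr1.
split; first by split.
split.
- move=> i Hi; rewrite coefHSS; case: i Hi => [|i] // Hi /=.
  rewrite B1 // A1 ?B1; [ring| |]; lia.
- by rewrite coefHSS /= B2 B1 // A1 //; ring.
- by rewrite coefHSS /= B3 !exprS; ring.
Qed.

Definition Gp s := Hp s.+1 - 'X * Hp s.

Lemma Gp_eval a b : a * b = a + b + K -> forall s,
  (b - a) * (Gp s).[a * b] = a ^+ s.+2 * (b - 1) - b ^+ s.+2 * (a - 1).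
Proof.
move=> hab s; rewrite /Gp !hornerE mulrBr (mulrCA (b - a)) !Hp_eval // !exprS; ring.
Qed.

Lemma Gp_coef s : (forall i, (s < i)%N -> (Gp s)`_i = 0) /\ (Gp s)`_0 = (- K) ^+ s.+1.
Proof.
case: (Hp_coef s) => A1 A2 A3; case: (Hp_coef s.+1) => B1 B2 B3.
split.
- move=> i Hi; rewrite /Gp coefB coefXM; case: i Hi => [|i] // Hi /=.
  case: (eqVneq i s) => [->|Hne]; first by rewrite B2 A2 subrr.
  rewrite B1 ?A1 ?subr0 //; lia.
- by rewrite /Gp coefB coefXM /= subr0 B3.
Qed.

Definition Qp (r t : nat) : {poly F} :=
  if (t < r)%N then - ('X^t * Hp (r - t).-1)
  else if t == r then 0 else 'X^r * Hp (t - r).-1.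

Lemma Qp_eval a b r t : a * b = a + b + K ->
  (b - a) * (Qp r t).[a * b] = a ^+ r * b ^+ t - b ^+ r * a ^+ t.
Proof.
move=> hab; rewrite /Qp.
case: ltnP => H1.
  have [d Hd] : exists d, r = (t + d.+1)%N by exists (r - t).-1; lia.
  subst r; have -> : ((t + d.+1 - t).-1 = d)%N by lia.
  rewrite hornerN hornerM hornerXn mulrN mulrCA Hp_eval // !exprD exprMn; ring.
case: eqP => [->|H2]; first by rewrite horner0 mulr0 mulrC subrr.
have [d Hd] : exists d, t = (r + d.+1)%N by exists (t - r).-1; lia.
subst t; have -> : ((r + d.+1 - r).-1 = d)%N by lia.
rewrite hornerM hornerXn mulrCA Hp_eval // !exprD exprMn; ring.
Qed.

Lemma Qp_coef_lo r t j : (t < r)%N -> ((j < t)%N || (r <= j)%N) -> (Qp r t)`_j = 0.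
Proof.
move=> H1 H2; rewrite /Qp H1 coefN coefXnM.
case: ifP => H3; first by rewrite oppr0.
case: (Hp_coef (r - t).-1) => A1 _ _; rewrite A1 ?oppr0 //; lia.
Qed.

Lemma Qp_coef_hi r t j : (r < t)%N -> ((j < r)%N || (t <= j)%N) -> (Qp r t)`_j = 0.
Proof.
move=> H1 H2; rewrite /Qp ltnNge (ltnW H1) /= gtn_eqF // coefXnM.
case: ifP => H3 //.
case: (Hp_coef (t - r).-1) => A1 _ _; rewrite A1 //; lia.
Qed.

Lemma Qp_rr r : Qp r r = 0.
Proof. by rewrite /Qp ltnn eqxx. Qed.

Lemma Qp_diag_lo r t : (t < r)%N -> (Qp r t)`_t = - (- K) ^+ (r - t).-1.
Proof.
move=> H; rewrite /Qp H coefN coefXnM ltnn subnn.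
by case: (Hp_coef (r - t).-1) => _ _ ->.
Qed.

Lemma Qp_diag_hi r t : (r < t)%N -> (Qp r t)`_t.-1 = 1.
Proof.
move=> H; rewrite /Qp ltnNge (ltnW H) /= gtn_eqF // coefXnM.
have -> : (t.-1 < r)%N = false by apply/negbTE; rewrite -leqNgt; lia.
have -> : (t.-1 - r = (t - r).-1)%N by lia.
by case: (Hp_coef (t - r).-1) => _ -> _.
Qed.

End Poly.


Section Mat.
Variable F : fieldType.
Variable N : nat.

Lemma det_blk r (A : 'M[F]_N) :
  (forall l j : 'I_N, (j < r)%N -> ((l < j)%N || (r <= l)%N) -> A l j = 0) ->
  (forall l j : 'I_N, (r <= j)%N -> ((j < l)%N || (l < r)%N) -> A l j = 0) ->
  \det A = \prod_i A i i.
Proof.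
move=> H1 H2.
pose A1 : 'M[F]_N := \matrix_(l, j) if (j < r)%N then A l j else (l == j)%:R.
pose A2 : 'M[F]_N := \matrix_(l, j) if (j < r)%N then (l == j)%:R else A l j.
have EA : A = A1 *m A2.
  apply/matrixP => l j; rewrite !mxE.
  case: (ltnP j r) => Hj.
    rewrite (bigD1 j) //= big1 ?addr0; first by rewrite !mxE Hj eqxx mulr1.
    move=> b Hb; rewrite !mxE Hj (negbTE Hb) mulr0 //.
  rewrite (bigD1 l) //= big1 ?addr0.
    rewrite !mxE (ltnNge j r) Hj /=; case: (ltnP l r) => Hl.
      by rewrite (H2 l j) ?mulr0 // Hl orbT.
    by rewrite eqxx mul1r.
  move=> b Hb; rewrite !mxE (ltnNge j r) Hj /=; case: (ltnP b r) => Hbr.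
    by rewrite (H2 b j) ?mulr0 // Hbr orbT.
  by rewrite eq_sym (negbTE Hb) mul0r.
rewrite {1}EA det_mulmx det_trig; last first.
  apply/is_trig_mxP => l j Hlj; rewrite !mxE; case: ifP => Hj.
    by apply: H1 => //; rewrite Hlj.
  by rewrite (_ : (l == j) = false) //; apply/negbTE; apply/eqP => E; rewrite E ltnn in Hlj.
rewrite -det_tr det_trig; last first.
  apply/is_trig_mxP => l j Hlj; rewrite !mxE; case: ifP => Hl.
    rewrite (_ : (j == l) = false) //; apply/negbTE; apply/eqP => E; by move: Hlj; rewrite E ltnn.
  by apply: H2; rewrite ?Hlj // leqNgt Hl.
rewrite -big_split; apply: eq_bigr => i _; rewrite !mxE; case: ifP => _; rewrite eqxx /=; ring.
Qed.

Definition aj (r j : nat) := if (j < r)%N then j else j.+1.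

Lemma sum_aj r t (g : nat -> F) : (r <= N)%N -> (t <= N)%N -> g r = 0 ->
  \sum_(j < N) g (aj r j) * (aj r j == t)%:R = g t.
Proof.
move=> Hr Ht Hg.
case: (eqVneq t r) => [->|Htr].
  rewrite Hg big1 // => j _; rewrite /aj; case: (ltnP j r) => H; rewrite (_ : (_ == r) = false) ?mulr0 //; apply/negbTE; apply/eqP; lia.
have Htr' : t <> r by apply/eqP.
have Hj0 : ((if (t < r)%N then t else t.-1) < N)%N by case: (ltnP t r) => H; lia.
rewrite (bigD1 (Ordinal Hj0)) //= big1 ?addr0.
  have -> : aj r (if (t < r)%N then t else t.-1) = t .
    rewrite /aj; case: (ltnP t r) => H; first by rewrite H.
    have H2 : (r <= t.-1)%N by lia.
    rewrite ltnNge H2 /=; lia.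
  by rewrite eqxx mulr1.
move=> j Hj; rewrite (_ : (aj r j == t) = false) ?mulr0 //.
apply/negbTE; apply/eqP => E; move/eqP: Hj; apply; apply: val_inj => /=.
move: E; rewrite /aj; case: (ltnP j r) => H; case: (ltnP t r) => H'; lia.
Qed.

Lemma prod_if r (u : nat -> F) : (r <= N)%N ->
  \prod_(i < N) (if (i < r)%N then u i else 1) = \prod_(0 <= i < r) u i.
Proof.
move=> Hr; rewrite -(big_mkord xpredT (fun i => if (i < r)%N then u i else 1)).
rewrite (big_cat_nat (n := r)) //= [X in _ * X]big1_seq ?mulr1.
  by apply: eq_big_nat => i /andP [_ ->].
move=> i /andP [_]; rewrite mem_iota => /andP [H _]; by rewrite ltnNge H.
Qed.

Variable K : F.

Definition Cm r : 'M[F]_N := \matrix_(l, j) (Qp K r (aj r j))`_l.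
Definition Dm r xi : 'M[F]_N := \matrix_(j, i) ((aj r j == i.+1)%:R - xi * (aj r j == i)%:R).
Definition Cfull r xi : 'M[F]_N := \matrix_(l, i) (Qp K r i.+1 - xi *: Qp K r i)`_l.

Lemma Cfull_eq r xi : (r <= N)%N -> Cfull r xi = Cm r *m Dm r xi.
Proof.
move=> Hr; apply/matrixP => l i; rewrite !mxE.
under eq_bigr do rewrite !mxE mulrBr.
rewrite big_split /= coefB coefZ; congr (_ + _).
  by rewrite (@sum_aj r i.+1 (fun t => (Qp K r t)`_l)) ?Qp_rr ?coef0.
rewrite sumrN; congr (- _); under eq_bigr do rewrite mulrCA.
rewrite -mulr_sumr; congr (_ * _).
by rewrite (@sum_aj r i (fun t => (Qp K r t)`_l)) ?Qp_rr ?coef0 // ltnW.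
Qed.

Lemma sumrev r : (\sum_(0 <= j < r) (r - j).-1 = 'C(r, 2))%N.
Proof.
rewrite -bin2_sum big_nat_rev /=; apply: eq_big_nat => i /andP [_ Hi]; lia.
Qed.

Lemma det_Cm r : (r <= N)%N -> \det (Cm r) = (-1) ^+ r * (- K) ^+ 'C(r, 2).
Proof.
move=> Hr; rewrite (@det_blk r).
- under eq_bigr do rewrite mxE.
  rewrite (eq_bigr (fun i : 'I_N => if (i < r)%N then - (- K) ^+ (r - i).-1 else 1)); last first.
    move=> i _; rewrite /aj; case: (ltnP i r) => H; first by rewrite Qp_diag_lo.
    have H2 := @Qp_diag_hi F K r i.+1; rewrite /= in H2; rewrite H2 //; lia.
  rewrite (@prod_if r (fun i => - (- K) ^+ (r - i).-1)) //.
  transitivity (\prod_(0 <= i < r) ((-1) * (- K) ^+ (r - i).-1)); first by apply: eq_big_nat => i _; rewrite mulN1r.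
  by rewrite big_split /= prodr_const_nat subn0 prodrXr sumrev.
- move=> l j Hj Hl; rewrite mxE /aj Hj Qp_coef_lo //.
- move=> l j Hj Hl; rewrite mxE /aj ltnNge Hj /= Qp_coef_hi //; lia.
Qed.

Lemma det_Dm r xi : (r <= N)%N -> \det (Dm r xi) = (- xi) ^+ r.
Proof.
move=> Hr; rewrite (@det_blk r).
- under eq_bigr do rewrite mxE.
  rewrite (eq_bigr (fun i : 'I_N => if (i < r)%N then - xi else 1)); last first.
    move=> i _; rewrite /aj; case: (ltnP i r) => H.
      by rewrite eqxx (ltn_eqF (ltnSn i)) mulr1 sub0r.
    by rewrite eqxx (gtn_eqF (ltnSn i)) mulr0 subr0.
  by rewrite (@prod_if r (fun _ => - xi)) // prodr_const_nat subn0.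
- move=> l j Hj Hl; rewrite mxE.
  have E1 : (aj r l == j.+1) = false by apply/negbTE; apply/eqP; rewrite /aj; case: (ltnP l r) => H; lia.
  have E2 : (aj r l == j) = false by apply/negbTE; apply/eqP; rewrite /aj; case: (ltnP l r) => H; lia.
  by rewrite E1 E2 /=; ring.
- move=> l j Hj Hl; rewrite mxE.
  have E1 : (aj r l == j.+1) = false by apply/negbTE; apply/eqP; rewrite /aj; case: (ltnP l r) => H; lia.
  have E2 : (aj r l == j) = false by apply/negbTE; apply/eqP; rewrite /aj; case: (ltnP l r) => H; lia.
  by rewrite E1 E2 /=; ring.
Qed.

Lemma det_Cfull r xi : (r <= N)%N ->
  \det (Cfull r xi) = (- K) ^+ ((r * (r - 1)) %/ 2) * xi ^+ r.
Proof.
move=> Hr; rewrite Cfull_eq // det_mulmx det_Cm // det_Dm //.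
by rewrite bin2 divn2 subn1 -mulrA mulrCA -exprMn mulN1r opprK.
Qed.

Definition Cm1 : 'M[F]_N := \matrix_(l, i) ('X^i * Gp K (N - i).-1)`_l.

Lemma det_Cm1 : \det Cm1 = (- K) ^+ (((N + 1) * N) %/ 2).
Proof.
rewrite det_trig; last first.
  by apply/is_trig_mxP => l i Hli; rewrite mxE coefXnM Hli.
under eq_bigr do rewrite mxE coefXnM ltnn subnn.
have E : forall i : 'I_N, (Gp K (N - i).-1)`_0 = (- K) ^+ (N - i).
  move=> i; case: (Gp_coef K (N - i).-1) => _ ->; congr (_ ^+ _).
  have := ltn_ord i; lia.
under eq_bigr do rewrite E.
rewrite prodrXr; congr (_ ^+ _).
rewrite -(big_mkord xpredT (fun i => N - i))%N.
have -> : (\sum_(0 <= i < N) (N - i) = \sum_(0 <= i < N.+1) i)%N.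
  rewrite big_nat_recl //= add0n big_nat_rev /=; apply: eq_big_nat => i /andP [_ Hi]; lia.
by rewrite bin2_sum bin2 divn2 addn1.
Qed.

End Mat.


Section Final.
Variable F : fieldType.
Variables (x y : nat -> F) (K : F) (N : nat).
Hypothesis curve : forall k, (k < N)%N -> x k * y k = x k + y k + K.
Hypothesis Hxy : forall k l, (k < N)%N -> (l < N)%N -> k != l -> x k - y l != 0.
Hypothesis Hyy : forall k l, (k < N)%N -> (l < N)%N -> k != l -> y k - y l != 0.
Let Lam := fun k => x k * y k.

Lemma key (c : nat -> F) (P : nat -> {poly F}) (bt : nat -> F) z :
  (forall k i, (k < N)%N -> (i < N)%N ->
     bt k * (y k ^+ i + c k * x k ^+ i) = (y k - x k) * (P i).[Lam k]) ->
  (forall i, (i < N)%N -> (size (P i) <= N)%N) ->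
  (\prod_(i < N) bt i) * \det (Mmix x y N N c z) =
  (\prod_(i < N) (y i - x i)) * Wp N Lam * \det (\matrix_(l < N, i < N) (P i)`_l).
Proof.
move=> HP HS.
have E : diag_mx (\row_(k < N) bt k) *m Mmix x y N N c z =
         diag_mx (\row_(k < N) (y k - x k)) *m (Mz N Lam *m \matrix_(l < N, i < N) (P i)`_l).
  apply/matrixP => k i; rewrite !mul_diag_mx !mxE ltn_ord HP //.
  congr (_ * _); rewrite (horner_coef_wide _ (HS i (ltn_ord i))).
  by apply: eq_bigr => l _; rewrite !mxE mulrC.
move: (congr1 determinant E); rewrite !det_mulmx !det_diag det_Mz.
have D1 : \prod_(i < N) (\row_(k < N) bt k) 0 i = \prod_(i < N) bt i by apply: eq_bigr => i _; rewrite mxE.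
have D2 : \prod_(i < N) (\row_(k < N) (y k - x k)) 0 i = \prod_(i < N) (y i - x i) by apply: eq_bigr => i _; rewrite mxE.
rewrite D1 D2 => ->; by rewrite mulrA.
Qed.

Lemma Vp_nz : Vp N y != 0.
Proof.
rewrite /Vp prodf_seq_neq0; apply/allP => k; rewrite mem_iota add0n subn0 => /andP [_ Hk] /=.
rewrite prodf_seq_neq0; apply/allP => l; rewrite mem_iota add0n subn0 => /andP [_ Hl] /=.
apply: Hyy; rewrite ?neq_ltn ?Hl //; exact: ltn_trans Hl Hk.
Qed.

Lemma ThG_closed_gen e f (c : nat -> F) P bt :
  (forall k, (k < N)%N -> cT x y e N f k = c k) ->
  (forall k i, (k < N)%N -> (i < N)%N ->
     bt k * (y k ^+ i + c k * x k ^+ i) = (y k - x k) * (P i).[Lam k]) ->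
  (forall i, (i < N)%N -> (size (P i) <= N)%N) ->
  ThG x y e N f * Vp N y * (\prod_(i < N) bt i) =
  (\prod_(i < N) (y i - x i)) * Vp N Lam * \det (\matrix_(l < N, i < N) (P i)`_l).
Proof.
move=> Hc HP HS.
rewrite (@ThG_Phi F x y e N f (fun _ => 0) Hxy Hyy).
rewrite (@Phi_c F x y N _ _ c) // (@Phi_ext _ _ _ _ _ (fun w => \det (Mz N w) * sg F N)); last first.
  by move=> w _; rewrite Vp_det mulrC.
rewrite Phi_scale Phi_det // Vp_det det_Mz.
transitivity (sg F N * ((\prod_(i < N) bt i) * \det (Mmix x y N N c (fun _ => 0)))); first ring.
rewrite (@key c P bt (fun _ => 0)) //; ring.
Qed.


Lemma Qp_coef_big r t j : (r <= N)%N -> (t <= N)%N -> (N <= j)%N -> (Qp K r t)`_j = 0.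
Proof.
move=> Hr Ht Hj; case: (ltngtP t r) => H.
- by apply: Qp_coef_lo => //; rewrite (leq_trans Hr Hj) orbT.
- by apply: Qp_coef_hi => //; rewrite (leq_trans Ht Hj) orbT.
- by rewrite H Qp_rr coef0.
Qed.

Lemma ThG_closed r xi e f : (r <= N)%N ->
  (forall k, (k < N)%N -> y k - xi != 0) -> (forall k, (k < N)%N -> x k != 0) ->
  (forall k, (k < N)%N -> cT x y e N f k = - ((y k / x k) ^+ r * ((x k - xi) / (y k - xi)))) ->
  ThG x y e N f * Vp N y * ((\prod_(i < N) x i) ^+ r * \prod_(i < N) (y i - xi)) =
  (\prod_(i < N) (y i - x i)) * Vp N Lam * ((- K) ^+ ((r * (r - 1)) %/ 2) * xi ^+ r).
Proof.
move=> Hr Hyxi Hx0 Hc.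
rewrite -(@det_Cfull F N K r xi Hr) /Cfull.
have -> : (\prod_(i < N) x i) ^+ r * \prod_(i < N) (y i - xi) = \prod_(i < N) (x i ^+ r * (y i - xi)).
  by rewrite big_split /= prodrXl.
apply: (@ThG_closed_gen e f (fun k => - ((y k / x k) ^+ r * ((x k - xi) / (y k - xi))))
   (fun i => Qp K r i.+1 - xi *: Qp K r i) (fun k => x k ^+ r * (y k - xi))) => //.
- move=> k i Hk Hi.
  rewrite hornerD hornerN hornerZ /Lam [in RHS]mulrBr [in RHS]mulrCA !Qp_eval ?curve //.
  rewrite expr_div_n !exprS; field.
  by rewrite Hyxi // expf_neq0 // Hx0.
- move=> i Hi; apply/leq_sizeP => j Hj.
  by rewrite coefB coefZ !Qp_coef_big // ?mulr0 ?subr0 // ltnW.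
Qed.

Lemma ThG_closed_m1 e f :
  (forall k, (k < N)%N -> y k - 1 != 0) -> (forall k, (k < N)%N -> x k != 0) ->
  (forall k, (k < N)%N -> cT x y e N f k = - ((y k / x k) ^+ N.+1 * ((x k - 1) / (y k - 1)))) ->
  ThG x y e N f * Vp N y * ((\prod_(i < N) x i) ^+ N.+1 * \prod_(i < N) (y i - 1)) =
  (\prod_(i < N) (y i - x i)) * Vp N Lam * (- K) ^+ (((N + 1) * N) %/ 2).
Proof.
move=> Hyxi Hx0 Hc.
rewrite -(det_Cm1 N K) /Cm1.
have -> : (\prod_(i < N) x i) ^+ N.+1 * \prod_(i < N) (y i - 1) = \prod_(i < N) (x i ^+ N.+1 * (y i - 1)).
  by rewrite big_split /= prodrXl.
apply: (@ThG_closed_gen e f (fun k => - ((y k / x k) ^+ N.+1 * ((x k - 1) / (y k - 1))))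
   (fun i => 'X^i * Gp K (N - i).-1) (fun k => x k ^+ N.+1 * (y k - 1))) => //.
- move=> k i Hk Hi.
  rewrite hornerM hornerXn /Lam [in RHS]mulrCA (Gp_eval (curve Hk)).
  set s := (N - i).-1.
  have -> : N.+1 = (i + s.+2)%N by rewrite /s; lia.
  rewrite expr_div_n !exprD !exprMn !exprS; field.
  by rewrite Hyxi // !expf_neq0 // Hx0.
- move=> i Hi; apply/leq_sizeP => j Hj.
  rewrite coefXnM; case: ifP => // H.
  case: (Gp_coef K (N - i).-1) => HG _; apply: HG; lia.
Qed.

End Final.


Section Misc.
Variable F : fieldType.

Lemma ordV n (a b : nat -> F) :
  \prod_(k < n) \prod_(l < n | (l < k)%N) ((a l - a k) / (b l - b k)) = Vp n a / Vp n b.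
Proof.
under eq_bigr do rewrite prodf_div.
rewrite prodf_div /Vp.
have H : forall c : nat -> F, \prod_(k < n) \prod_(l < n | (l < k)%N) (c l - c k) =
    \prod_(0 <= k < n) \prod_(0 <= l < k) (c l - c k).
  move=> c; rewrite -(big_mkord xpredT (fun k => \prod_(l < n | (l < k)%N) (c l - c k))).
  apply: eq_big_nat => k /andP [_ Hk].
  rewrite -(big_mkord (fun l => (l < k)%N) (fun l => c l - c k)).
  by rewrite (big_nat_widen 0 k n xpredT) // ltnW.
by rewrite !H.
Qed.

Lemma cT_ampl (x y e : nat -> F) n xi k : (k < n)%N -> x k != 0 -> y k - xi != 0 ->
  (forall j, (j < n)%N -> j != k -> Af x y k (y j) != 0) ->
  cT x y e n (fun k => (y k / x k) * ((x k - xi) / (y k - xi)) *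
      \prod_(l < n | (l : nat) != k) ((y k / x k) * ((x k - y l) / (y k - y l)))) k
  = - ((y k / x k) ^+ n * e k * ((x k - xi) / (y k - xi))).
Proof.
move=> Hk Hx Hyx HA.
rewrite /cT.
rewrite -(big_mkord (fun l => l != k) (fun l => (y k / x k) * ((x k - y l) / (y k - y l)))).
rewrite big_split /=.
have Hu : (y k / x k) * \prod_(0 <= l < n | l != k) (y k / x k) = (y k / x k) ^+ n.
  rewrite -(bigD1_seq (F := fun _ => y k / x k) k).
  - by rewrite (prodr_const_nat 0 n (y k / x k)) subn0.
  - by rewrite mem_index_iota.
  - exact: iota_uniq.
have HP : \prod_(0 <= j < n | j != k) Af x y k (y j) != 0.
  rewrite prodf_seq_neq0; apply/allP => j; rewrite mem_iota add0n subn0 => /andP [_ Hj].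
  by apply/implyP => Hjk; apply: HA.
rewrite -Hu.
have -> : \prod_(0 <= i < n | i != k) ((x k - y i) / (y k - y i)) = \prod_(0 <= j < n | j != k) Af x y k (y j) by [].
move: HP; set P := \prod_(0 <= j < n | j != k) Af x y k (y j) => HP.
set U := \prod_(0 <= l < n | l != k) (y k / x k).
field; by rewrite Hyx Hx HP.
Qed.

End Misc.

Local Open Scope complex_scope.

Section Trig.
Variable R : realType.

Lemma expiN1 (a : R) : expi a * expi (- a) = 1.
Proof.
rewrite /expi cosN sinN; apply/eqP; rewrite eq_complex /=.
have := cos2Dsin2 a => H.
apply/andP; split; apply/eqP.
  rewrite -H; ring.
ring.
Qed.

Lemma expiD2 (a : R) : expi a + expi (- a) = (2 * cos a)%:C.
Proof.
rewrite /expi cosN sinN; apply/eqP; rewrite eq_complex /=.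
apply/andP; split; apply/eqP; ring.
Qed.

End Trig.

Unset Implicit Arguments.

Lemma Theta_ThG (R : realType) (D Ds E : nat -> R[i]) m n f :
  Theta D Ds E m n f = ThG D Ds (fun k => E k ^ (2 * m)) n f.
Proof. by elim: n f => [|n IH] f //=; rewrite !IH. Qed.

Theorem mainTheorem2 (R : realType) (M n : nat) (j : nat -> nat)
    (K xi : R[i]) (rt : nat -> R[i]) :
  (2 <= M)%N -> (1 <= n <= M - 1)%N ->
  (forall k, (k < n)%N -> (0 < j k < M)%N) ->
  (forall k l, (k < n)%N -> (l < n)%N -> j k = j l -> k = l) ->
  (forall k, (k < n)%N -> rt k ^+ 2 = (cos (phiM R M (j k)) ^+ 2)%:C + K) ->
  let D := fun k => DeltaF (phiM R M (j k)) (rt k) in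
  let Ds := fun k => DeltaSF (phiM R M (j k)) (rt k) in
  let E := fun k => expi (phiM R M (j k)) in
  let Lam := fun k => D k * Ds k in
  (forall k, (k < n)%N -> D k != 0) ->
  (forall k, (k < n)%N -> Ds k - xi != 0) ->
  (forall k l, (k < n)%N -> (l < n)%N -> k != l -> D k - Ds l != 0) ->
  (forall k l, (k < n)%N -> (l < n)%N -> k != l -> Ds k - Ds l != 0) ->
  let Th := fun (m : int) (x : R[i]) => Theta D Ds E m n (ampl D Ds n x) in
  let PD := \prod_(k < n) D k in
  Th n%:Z xi =
    (\prod_(k < n) ((Ds k - D k) / (Ds k - xi))) *
    \prod_(k < n) \prod_(l < n | (l < k)%N) ((Lam l - Lam k) / (Ds l - Ds k))
  /\ (forall m : nat, (m <= n)%N ->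
        Th m%:Z xi = (- K) ^+ (((n - m) * (n - m - 1)) %/ 2) * (xi / PD) ^+ (n - m)
                     * Th n%:Z xi)
  /\ (xi = 1 ->
        Th (-1) xi = (- K) ^+ (((n + 1) * n) %/ 2) * (xi / PD) ^+ (n + 1)
                     * Th n%:Z xi).
Proof.
move=> HM /andP [Hn1 HnM] Hjk Hinj Hrt D Ds E Lam HD Hdxi Hdd Hdsds Th PD.
have Hexp1 : forall k, expi (phiM R M (j k)) * expi (- phiM R M (j k)) = 1.
  by move=> k; exact: expiN1.
have HS : forall k, (k < n)%N -> rt k + (cos (phiM R M (j k)))%:C != 0.
  move=> k Hk; apply: contraNneq (HD k Hk) => H; by rewrite /D /DeltaF H mulr0.
have HDs0 : forall k, (k < n)%N -> Ds k != 0.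
  move=> k Hk; rewrite /Ds /DeltaSF mulf_neq0 ?HS //.
  apply/eqP => H; have := Hexp1 k; rewrite H mulr0 => /eqP; by rewrite eq_sym oner_eq0.
have HE2 : forall k, (k < n)%N -> E k ^+ 2 = D k / Ds k.
  move=> k Hk; apply: (mulIf (HDs0 k Hk)); rewrite divfK ?HDs0 //.
  rewrite /E /D /Ds /DeltaF /DeltaSF expr2 -!mulrA; congr (_ * _).
  by rewrite mulrA Hexp1 mul1r.
have Hcurve : forall k, (k < n)%N -> D k * Ds k = D k + Ds k + K.
  move=> k Hk; rewrite /D /Ds /DeltaF /DeltaSF.
  have E1 := Hexp1 k; have E2 := expiD2 (phiM R M (j k)); have E3 := Hrt k Hk.
  set a := expi (phiM R M (j k)) in E1 E2 *.
  set b := expi (- phiM R M (j k)) in E1 E2 *.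
  set c := (cos (phiM R M (j k)))%:C in E3 *.
  have E2' : a + b = 2 * c by rewrite E2 rmorphM rmorph_nat.
  have E3' : rt k ^+ 2 = c ^+ 2 + K by rewrite E3 rmorphXn.
  transitivity ((a * b) * (rt k + c) ^+ 2); first by ring.
  have -> : a * (rt k + c) + b * (rt k + c) + K = (a + b) * (rt k + c) + K by ring.
  rewrite E1 E2'.
  have HK : K = rt k ^+ 2 - c ^+ 2 by rewrite E3'; ring.
  rewrite HK; ring.
have HA : forall k l, (k < n)%N -> (l < n)%N -> l != k -> Af D Ds k (Ds l) != 0.
  move=> k l Hk Hl Hlk; rewrite /Af mulf_neq0 // ?invr_eq0; first by apply: Hdd => //; rewrite eq_sym.
  by apply: Hdsds => //; rewrite eq_sym.
have Hc : forall (m : int) k, (k < n)%N ->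
    cT D Ds (fun k => E k ^ (2 * m)) n (ampl D Ds n xi) k =
    - ((Ds k / D k) ^+ n * E k ^ (2 * m) * ((D k - xi) / (Ds k - xi))).
  move=> m k Hk; apply: cT_ampl => //; [exact: HD | exact: Hdxi | move=> l Hl Hlk; exact: HA].
have Hpow : forall (m : nat) k, (k < n)%N -> E k ^ (2 * m%:Z) = (D k / Ds k) ^+ m.
  move=> m k Hk; rewrite -exprz_exp.
  have -> : E k ^ 2 = E k ^+ 2 by [].
  by rewrite HE2.
have Tm : forall m : nat, (m <= n)%N ->
    Th m%:Z xi * Vp n Ds * ((\prod_(i < n) D i) ^+ (n - m) * \prod_(i < n) (Ds i - xi)) =
    (\prod_(i < n) (Ds i - D i)) * Vp n Lam * ((- K) ^+ (((n - m) * (n - m - 1)) %/ 2) * xi ^+ (n - m)).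
  move=> m Hm; rewrite /Th Theta_ThG.
  apply: ThG_closed => //; first exact: leq_subr.
  move=> k Hk; rewrite Hc // Hpow //.
  have Hu : D k / Ds k = (Ds k / D k)^-1 by rewrite invf_div.
  rewrite Hu exprVn (exprB Hm) //.
  by rewrite unitfE; apply: mulf_neq0; [exact: HDs0 | rewrite invr_eq0; exact: HD].
have HV : Vp n Ds != 0 by apply: Vp_nz.
have HQ : \prod_(i < n) (Ds i - xi) != 0.
  by apply/prodf_neq0 => i _; apply: Hdxi.
have HP : \prod_(i < n) D i != 0.
  by apply/prodf_neq0 => i _; apply: HD.
have ETn : Th n%:Z xi = (\prod_(i < n) (Ds i - D i)) * Vp n Lam / (Vp n Ds * \prod_(i < n) (Ds i - xi)).
  apply: (mulIf (mulf_neq0 HV HQ)); rewrite /= mulrA.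
  have := Tm n (leqnn n); rewrite subnn /= expr0 mul1r mulr1 => ->.
  field; by rewrite HV HQ.
have ETm : forall m : nat, (m <= n)%N -> Th m%:Z xi =
    (\prod_(i < n) (Ds i - D i)) * Vp n Lam * ((- K) ^+ (((n - m) * (n - m - 1)) %/ 2) * xi ^+ (n - m))
    / (Vp n Ds * ((\prod_(i < n) D i) ^+ (n - m) * \prod_(i < n) (Ds i - xi))).
  move=> m Hm; apply: (mulIf (mulf_neq0 HV (mulf_neq0 (expf_neq0 (n - m) HP) HQ))).
  rewrite /= mulrA Tm //; field; by rewrite HV HQ expf_neq0.
split.
  rewrite ETn prodf_div ordV; field.
  by rewrite HV HQ.
split.
  move=> m Hm; rewrite ETm // ETn /PD expr_div_n; field.
  by rewrite HV HQ ?expf_neq0 ?HP.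
move=> Hxi; subst xi.
have Tm1 : Th (-1) 1 * Vp n Ds * ((\prod_(i < n) D i) ^+ n.+1 * \prod_(i < n) (Ds i - 1)) =
    (\prod_(i < n) (Ds i - D i)) * Vp n Lam * (- K) ^+ (((n + 1) * n) %/ 2).
  rewrite /Th Theta_ThG; apply: ThG_closed_m1 => //.
  move=> k Hk; rewrite Hc // -exprz_exp.
  have -> : E k ^ 2 = E k ^+ 2 by [].
  by rewrite HE2 // exprN1 invf_div exprSr.
have ET1 : Th (-1) 1 = (\prod_(i < n) (Ds i - D i)) * Vp n Lam * (- K) ^+ (((n + 1) * n) %/ 2)
    / (Vp n Ds * ((\prod_(i < n) D i) ^+ n.+1 * \prod_(i < n) (Ds i - 1))).
  apply: (mulIf (mulf_neq0 HV (mulf_neq0 (expf_neq0 n.+1 HP) HQ))).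
  rewrite /= mulrA Tm1.
  have Hpp := expf_neq0 n.+1 HP.
  move: Hpp; set pp := (\prod_(i < n) D i) ^+ n.+1; set kk := (- K) ^+ _ => Hpp.
  field; by rewrite HV HQ Hpp.
rewrite ET1 ETn /PD expr_div_n addn1 expr1n.
have Hpp := expf_neq0 n.+1 HP.
move: Hpp; set pp := (\prod_(i < n) D i) ^+ n.+1; set kk := (- K) ^+ _ => Hpp.
field; by rewrite HV HQ Hpp.
Qed.
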